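(* For every $n\ge 0$, $|P_n^2|$ is at most the number of words of length $3n$ over the alphabet $\{m_1,m_2,m_3\}$ that contain none of $m_1m_3$, $m_1m_2m_2m_3$, $m_1m_2m_3m_2$ as a (contiguous) factor. This number equals $[x^{3n}]\,U(x)$ where $U(x)=\dfrac{1}{1-3x+x^2+2x^4}$, and consequently $|P_n^2|\in O(14.864^n)$.
   Context: A system of $2$ stacks in series consists of an input queue, stack 1, stack 2, and an output queue. Moves: $m_1$ moves the front of the input queue onto stack 1; $m_2$ pops stack 1 and pushes onto stack 2; $m_3$ pops stack 2 and enqueues at the back of the output queue. A word $w$ over $\{m_1,m_2,m_3\}$ acts on states by applying moves left to right (illegal if a move's source is empty). $I(n,2)$ is the state with $1,\dots,n$ in the input queue (front to back) and everything else empty; for $\pi\in S_n$, $t_\pi$ is the state with only the output queue nonempty, containing $\pi(1),\dots,\pi(n)$ front to back. $P_n^2\subseteq S_n$ is the set of $\pi$ such that some word $w$ legally transforms $I(n,2)$ into $t_\pi$. $[x^N]F(x)$ denotes the coefficient of $x^N$ in the power series $F$. *)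

(* Defs.v *)
From HB Require Import structures.
From mathcomp Require Import all_boot all_order all_algebra all_fingroup.
From Stdlib Require Import ClassicalEpsilon.
Set Implicit Arguments. Unset Strict Implicit. Unset Printing Implicit Defensive.
Import Order.TTheory GRing.Theory Num.Theory.

Definition move := 'I_3.
Definition m1 : move := @Ordinal 3 0 isT.
Definition m2 : move := @Ordinal 3 1 isT.
Definition m3 : move := @Ordinal 3 2 isT.

(* State: (input queue front-first, stack 1 top-first, stack 2 top-first,
   output queue front-first). *)
Definition state : Type := (seq nat * seq nat * seq nat * seq nat)%type.

Definition step (m : move) (s : state) : option state :=
  let '(inq, s1, s2, out) := s in
  match val m with
  | 0 => match inq with x :: r => Some (r, x :: s1, s2, out) | [::] => None end
  | 1 => match s1 with x :: r => Some (inq, r, x :: s2, out) | [::] => None end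
  | _ => match s2 with x :: r => Some (inq, s1, r, rcons out x) | [::] => None end
  end.

Definition run (w : seq move) (s : state) : option state :=
  foldl (fun os m => obind (step m) os) (Some s) w.

(* I(n,2): labels 0..n-1 (relabelling of 1..n) in the input queue. *)
Definition init_state (n : nat) : state := (iota 0 n, [::], [::], [::]).

Definition final_state (n : nat) (pi : 'S_n) : state :=
  ([::], [::], [::], [seq val (pi i) | i <- enum 'I_n]).

Definition asbool (P : Prop) : bool :=
  if excluded_middle_informative P then true else false.

Definition sortable2 (n : nat) (pi : 'S_n) : Prop :=
  exists w : seq move, run w (init_state n) = Some (final_state pi).

Definition P2 (n : nat) : {set 'S_n} := [set pi | asbool (sortable2 pi)].

Definition avoids (w : seq move) : bool :=
  [&& ~~ infix [:: m1; m3] w,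
      ~~ infix [:: m1; m2; m2; m3] w &
      ~~ infix [:: m1; m2; m3; m2] w].

Definition nwords (N : nat) : nat :=
  #|[set w : N.-tuple move | avoids w]|.

Definition Uden : seq int := [:: 1; -3; 1; 0; 2]%R.

Definition is_series_inverse (p : seq int) (c : nat -> int) : Prop :=
  forall N : nat, (\sum_(k < N.+1) p`_k * c (N - k)%N)%R = Posz (N == 0%N).

(* Main.v *)
Require Import Defs.
From HB Require Import structures.
From mathcomp Require Import all_boot all_order all_algebra all_fingroup.
From mathcomp Require Import zify.
From Stdlib Require Import ClassicalEpsilon.
From Stdlib Require ZArith.
Import Order.TTheory GRing.Theory Num.Theory.

Fixpoint W (N : nat) : seq (seq move) :=
  if N is K.+1 then
    [seq m1 :: w | w <- W K] ++ [seq m2 :: w | w <- W K] ++ [seq m3 :: w | w <- W K]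
  else [:: [::]].

Lemma countW K (P : pred (seq move)) :
  count P (W K.+1) = count (fun w => P (m1 :: w)) (W K)
    + count (fun w => P (m2 :: w)) (W K) + count (fun w => P (m3 :: w)) (W K).
Proof. by rewrite /= !count_cat !count_map addnA. Qed.

Lemma count_memW N s : count_mem s (W N) = (size s == N).
Proof.
elim: N s => [|N IH] s.
  by case: s.
rewrite countW.
case: s => [|y s].
  by rewrite !(eq_count (a2 := pred0)) ?count_pred0.
rewrite (eq_count (a2 := fun w => (m1 == y) && (w == s))); last first.
  by move=> w /=; rewrite eqseq_cons.
rewrite (eq_count (a1 := fun w => _ (m2 :: w)) (a2 := fun w => (m2 == y) && (w == s))); last first.
  by move=> w /=; rewrite eqseq_cons.
rewrite (eq_count (a1 := fun w => _ (m3 :: w)) (a2 := fun w => (m3 == y) && (w == s))); last first.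
  by move=> w /=; rewrite eqseq_cons.
have E b : count (fun w => b && (w == s)) (W N) = b * (size s == N).
  case: b; rewrite ?mul1n ?mul0n -?IH.
    by apply: eq_count.
  by rewrite (eq_count (a2 := pred0)) ?count_pred0.
rewrite !E /= eqSS.
case: y => [[|[|[|y]]] Hy] //=.
all: by rewrite ?mul1n ?mul0n ?addn0 ?add0n.
Qed.

Lemma memW N s : (s \in W N) = (size s == N).
Proof. by rewrite -has_pred1 has_count count_memW lt0b. Qed.

Lemma uniqW N : uniq (W N).
Proof. by apply: count_mem_uniq => s; rewrite count_memW memW. Qed.

Lemma card_words N (P : pred (seq move)) :
  #|[set w : N.-tuple move | P w]| = count P (W N).
Proof.
have pe : perm_eq (W N) (map val (enum {: N.-tuple move})).
  apply: uniq_perm; first exact: uniqW.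
    by rewrite map_inj_uniq ?enum_uniq //; apply: val_inj.
  move=> s; rewrite memW; apply/idP/idP.
    by move=> Hs; apply/mapP; exists (Tuple Hs); rewrite ?mem_enum.
  by case/mapP => t _ ->; rewrite size_tuple.
rewrite ((seq.permP pe) P) count_map enumT cardsE cardE /enum_mem size_filter.
by apply: eq_count => t.
Qed.

Definition bad (w : seq move) :=
  [|| prefix [:: m3] w, prefix [:: m2; m2; m3] w | prefix [:: m2; m3; m2] w].

Lemma avoids_m2 w : avoids (m2 :: w) = avoids w.
Proof. by rewrite /avoids !infix_consl /=. Qed.
Lemma avoids_m3 w : avoids (m3 :: w) = avoids w.
Proof. by rewrite /avoids !infix_consl /=. Qed.
Lemma avoids_m1 w : avoids (m1 :: w) = avoids w && ~~ bad w.
Proof.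
rewrite /avoids /bad !infix_consl /=.
case: (prefix [:: m3] w); case: (prefix [:: m2; m2; m3] w);
  case: (prefix [:: m2; m3; m2] w); by rewrite ?andbF ?andbT ?orbT ?orbF.
Qed.

Definition T N := count avoids (W N).

Lemma count_split (a b : pred (seq move)) s :
  count (fun w => a w && ~~ b w) s + count (fun w => a w && b w) s = count a s.
Proof. elim: s => //= x s IH; case: (a x); case: (b x) => /=; lia. Qed.

Lemma countW' K (P Q1 Q2 Q3 : pred (seq move)) :
  (forall w, P (m1 :: w) = Q1 w) -> (forall w, P (m2 :: w) = Q2 w) ->
  (forall w, P (m3 :: w) = Q3 w) ->
  count P (W K.+1) = count Q1 (W K) + count Q2 (W K) + count Q3 (W K).
Proof. by move=> H1 H2 H3; rewrite countW; congr (_ + _ + _); apply: eq_count. Qed.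

Ltac sg := move=> w; cbv beta; rewrite /bad ?avoids_m1 ?avoids_m2 ?avoids_m3 /= ?prefix0s ?andbT ?andbF ?orbF.

Lemma cnt_m3 K : count (fun w => avoids w && prefix [:: m3] w) (W K.+1) = T K.
Proof. by rewrite (@countW' _ _ pred0 pred0 avoids) ?count_pred0 //; sg. Qed.
Lemma cnt_m2 K : count (fun w => avoids w && prefix [:: m2] w) (W K.+1) = T K.
Proof. by rewrite (@countW' _ _ pred0 avoids pred0) ?count_pred0 ?addn0 //; sg. Qed.

Lemma cnt_inner M : count (fun w => avoids w && (prefix [:: m2; m3] w || prefix [:: m3; m2] w)) (W M.+2) = 2 * T M.
Proof.
rewrite (@countW' _ _ pred0 (fun w => avoids w && prefix [:: m3] w) (fun w => avoids w && prefix [:: m2] w)); try by sg.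
rewrite !count_pred0 cnt_m3 cnt_m2; lia.
Qed.

Lemma cnt_bad M : count (fun w => avoids w && bad w) (W M.+3) = T M.+2 + 2 * T M.
Proof.
rewrite (@countW' _ _ pred0 (fun w => avoids w && (prefix [:: m2; m3] w || prefix [:: m3; m2] w)) avoids); try by sg.
rewrite !count_pred0 cnt_inner /T; lia.
Qed.

Lemma T_rec M : T M.+4 + T M.+2 + 2 * T M = 3 * T M.+3.
Proof.
rewrite {1}/T (@countW' _ _ (fun w => avoids w && ~~ bad w) avoids avoids); try by sg.
have := count_split avoids bad (W M.+3). rewrite cnt_bad -/(T M.+3). lia.
Qed.

Lemma T_small : [/\ T 0 = 1, T 1 = 3, T 2 = 8 & T 3 = 21].
Proof. by []. Qed.

Lemma nwordsE N : nwords N = T N.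
Proof. by rewrite /nwords card_words. Qed.

Local Open Scope ring_scope.

Lemma expand (c : nat -> int) M :
  \sum_(k < M.+4.+1) Uden`_k * c (M.+4 - k)%N = c M.+4 - 3 * c M.+3 + c M.+2 + 2 * c M.
Proof.
rewrite !big_ord_recl big1 /=; last first.
  by move=> i _; rewrite nth_default ?mul0r.
rewrite /bump /= !subSS !subn0; lia.
Qed.

Lemma series_T (c : nat -> int) : is_series_inverse Uden c -> forall N, c N = Posz (T N).
Proof.
move=> H.
have H0 : c 0%N = 1.
  have := H 0%N; rewrite big_ord_recl big_ord0 /= ?subnn; lia.
have H1 : c 1%N = 3.
  have := H 1%N; rewrite !big_ord_recl big_ord0 /= /bump /= ?subSS ?subn0 ?subnn; lia.
have H2 : c 2%N = 8.
  have := H 2%N; rewrite !big_ord_recl big_ord0 /= /bump /= ?subSS ?subn0 ?subnn; lia.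
have H3 : c 3%N = 21.
  have := H 3%N; rewrite !big_ord_recl big_ord0 /= /bump /= ?subSS ?subn0 ?subnn; lia.
suff: forall M, [/\ c M = Posz (T M), c M.+1 = Posz (T M.+1), c M.+2 = Posz (T M.+2) & c M.+3 = Posz (T M.+3)].
  by move=> h N; case: (h N).
elim=> [|M [E0 E1 E2 E3]]; first by rewrite H0 H1 H2 H3.
split=> //.
have := H M.+4; rewrite expand /=.
have := T_rec M. lia.
Qed.

Local Close Scope ring_scope.

Lemma foldl_none w : foldl (fun os m => obind (step m) os) None w = None.
Proof. by elim: w. Qed.

Lemma run_cons m w s : run (m :: w) s = if step m s is Some t then run w t else None.
Proof. rewrite /run /=. case: (step m s) => [t|] //. exact: foldl_none. Qed.

Lemma run_cat a b s : run (a ++ b) s = obind (run b) (run a s).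
Proof.
elim: a s => [|m a IH] s //=.
rewrite !run_cons; case: (step m s) => //.
Qed.

Definition pot (s : state) : nat :=
  let '(i, a, b, o) := s in 3 * size i + 2 * size a + size b.

Lemma step_pot m s t : step m s = Some t -> (pot t).+1 = pot s.
Proof.
case: s => [[[i a] b] o]; case: m => [[|[|[|k]]] Hk] //=.
- case: i => [|x i] //= [<-] /=; lia.
- case: a => [|x a] //= [<-] /=; lia.
- case: b => [|x b] //= [<-] /=; lia.
Qed.

Lemma run_pot w s t : run w s = Some t -> size w + pot t = pot s.
Proof.
elim: w s => [|m w IH] s /=; first by case=> ->.
rewrite run_cons; case E: (step m s) => [u|] // /IH.
move/step_pot: E; lia.
Qed.

Lemma pat1 t : run [:: m1; m3] t = run [:: m3; m1] t.
Proof. by case: t => [[[[|x i] [|y a]] [|z b]] o]. Qed.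
Lemma pat2 t : run [:: m1; m2; m2; m3] t = run [:: m2; m3; m1; m2] t.
Proof. by case: t => [[[[|x i] [|y a]] [|z b]] o]. Qed.
Lemma pat3 t : run [:: m1; m2; m3; m2] t = run [:: m2; m1; m2; m3] t.
Proof. by case: t => [[[[|x i] [|y a]] [|z b]] o]. Qed.

Fixpoint mu (w : seq move) : nat := if w is x :: r then (x == m1) * size r + mu r else 0.

Lemma mu_cat a c : mu (a ++ c) = mu a + mu c + count_mem m1 a * size c.
Proof. elim: a => [|x a IH] /=; first by rewrite add0n mul0n addn0.
rewrite IH size_cat; case: (x == m1) => /=; lia. Qed.

Lemma swap_pat p p' a b s :
  size p = size p' -> count_mem m1 p = count_mem m1 p' -> mu p' < mu p ->
  (forall t, run p t = run p' t) ->
  [/\ mu (a ++ p' ++ b) < mu (a ++ p ++ b), size (a ++ p' ++ b) = size (a ++ p ++ b)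
    & run (a ++ p' ++ b) s = run (a ++ p ++ b) s].
Proof.
move=> Hs Hc Hm Hr; split.
- rewrite !mu_cat !size_cat Hs Hc; by rewrite ltn_add2r ltn_add2l !ltn_add2r.
- by rewrite !size_cat Hs.
- rewrite !run_cat; case: (run a s) => //= u; by rewrite !run_cat Hr.
Qed.

Lemma normal k : forall w s t, mu w < k -> run w s = Some t ->
  exists w', [/\ avoids w', size w' = size w & run w' s = Some t].
Proof.
elim: k => [|k IH] w s t; first by [].
move=> Hmu Hrun.
case Hav: (avoids w); first by exists w.
have gen : forall p p', size p = size p' -> count_mem m1 p = count_mem m1 p' -> mu p' < mu p ->
  (forall t, run p t = run p' t) -> infix p w ->
  exists w', [/\ avoids w', size w' = size w & run w' s = Some t].
  move=> p p' H1 H2 H3 H4 /infixP [a [b Ew]].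
  have [M1 S1 R1] := @swap_pat p p' a b s H1 H2 H3 H4.
  have Hlt : mu (a ++ p' ++ b) < k by rewrite -Ew in M1; lia.
  have Hr' : run (a ++ p' ++ b) s = Some t by rewrite R1 -Ew.
  have [w' [A1 A2 A3]] := IH _ _ _ Hlt Hr'.
  by exists w'; rewrite A2 S1 -Ew.
move: Hav; rewrite /avoids.
case I1: (infix [:: m1; m3] w).
  by move=> _; apply: (gen [:: m1; m3] [:: m3; m1]) => //; first exact: pat1.
case I2: (infix [:: m1; m2; m2; m3] w).
  by move=> _; apply: (gen [:: m1; m2; m2; m3] [:: m2; m3; m1; m2]) => //; first exact: pat2.
case I3: (infix [:: m1; m2; m3; m2] w) => //.
by move=> _; apply: (gen [:: m1; m2; m3; m2] [:: m2; m1; m2; m3]) => //; first exact: pat3.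
Qed.

Lemma asboolP (P : Prop) : asbool P = true <-> P.
Proof. by rewrite /asbool; case: excluded_middle_informative. Qed.

Lemma final_inj n (pi pi' : 'S_n) : final_state pi = final_state pi' -> pi = pi'.
Proof.
case=> /eq_in_map H; apply/permP => i; apply: val_inj; exact: H (mem_enum _ i).
Qed.

Lemma sortable_word n (pi : 'S_n) : sortable2 pi ->
  exists w : (3 * n).-tuple move, avoids w && (run w (init_state n) == Some (final_state pi)).
Proof.
case=> w Hw.
have [w' [A1 A2 A3]] := @normal (mu w).+1 _ _ _ (ltnSn (mu w)) Hw.
have Hs : size w' == 3 * n.
  have := @run_pot _ _ _ A3; rewrite /= /= size_iota. lia.
by exists (Tuple Hs); rewrite /= A1 A3 eqxx.
Qed.

Lemma P2_le n : #|P2 n| <= nwords (3 * n).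
Proof.
pose g (w : (3 * n).-tuple move) : option 'S_n :=
  [pick pi | run w (init_state n) == Some (final_state pi)].
rewrite /nwords -(card_imset (P2 n) (@Some_inj _)).
apply: leq_trans (leq_imset_card g _).
apply: subset_leq_card; apply/subsetP => o /imsetP [pi]; rewrite inE => /asboolP Hpi ->.
have [w /andP [Aw Rw]] := @sortable_word n pi Hpi.
apply/imsetP; exists w; first by rewrite inE.
rewrite /g; case: pickP => [pi' /eqP Hpi'|none].
  move/eqP: Rw; rewrite Hpi' => E. have E2 := Some_inj E. by rewrite (@final_inj n _ _ E2).
by have := none pi; rewrite Rw.
Qed.

Module ZP.
Import ZArith.


Definition t N := Z.of_nat (T N).

Lemma t_rec M : (t M.+4 = 3 * t M.+3 - t M.+2 - 2 * t M)%Z.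
Proof. have := T_rec M; rewrite /t; lia. Qed.

Lemma t_nonneg N : (0 <= t N)%Z.
Proof. rewrite /t; lia. Qed.

Lemma t_mono N : (2 * t N <= t N.+1)%Z.
Proof.
suff: forall M, (2 * t M <= t M.+1)%Z /\ (2 * t M.+1 <= t M.+2)%Z /\ (2 * t M.+2 <= t M.+3)%Z.
  by move=> h; case: (h N).
elim=> [|M [h1 [h2 h3]]].
  by rewrite /t /=; lia.
split; first exact: h2. split; first exact: h3.
rewrite t_rec; have := t_nonneg M; lia.
Qed.

Definition phi M := (141420761 * t M.+3 - 76546362 * t M.+2 - 46786321 * t M.+1 - 115035081 * t M)%Z.

Lemma phi_step M : (521 * phi M.+1 <= 1281 * phi M)%Z.
Proof. rewrite /phi t_rec; have := t_nonneg M; lia. Qed.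

Lemma phi0 : phi 0 = 2102071041%Z.
Proof. by rewrite /phi /t /=. Qed.

Lemma phi_iter k : (521 ^ Z.of_nat k * phi k <= 1281 ^ Z.of_nat k * phi 0)%Z.
Proof.
elim: k => [|k IH]; first by rewrite /=; lia.
rewrite Nat2Z.inj_succ !Z.pow_succ_r; try lia.
have hp : (0 <= 521 ^ Z.of_nat k)%Z by apply: Z.pow_nonneg; lia.
have := phi_step k.
nia.
Qed.

Lemma phi_lower M : (616572917 * t M.+3 <= 8 * phi M)%Z.
Proof.
rewrite /phi.
have := t_mono M; have := t_mono M.+1; have := t_mono M.+2; have := t_nonneg M.
lia.
Qed.

Lemma bound_Z m : (616572917 * 1000 ^ Z.of_nat m * t (3 * m).+3 <= 8 * 2102071041 * 14864 ^ Z.of_nat m)%Z.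
Proof.
have h1 := phi_iter (3 * m).
have h2 := phi_lower (3 * m).
rewrite phi0 in h1.
have e3 : Z.of_nat (3 * m) = (3 * Z.of_nat m)%Z by lia.
rewrite e3 !Z.pow_mul_r in h1; try lia.
set B := ((521 ^ 3) ^ Z.of_nat m)%Z in h1.
set C := ((1281 ^ 3) ^ Z.of_nat m)%Z in h1.
have hB : (0 < B)%Z by apply: Z.pow_pos_nonneg; lia.
have hC : (0 <= C)%Z by apply: Z.pow_nonneg; lia.
have hD : (0 < 1000 ^ Z.of_nat m)%Z by apply: Z.pow_pos_nonneg; lia.
have h3 : (1000 ^ Z.of_nat m * C <= 14864 ^ Z.of_nat m * B)%Z.
  rewrite /B /C -!Z.pow_mul_l; apply: Z.pow_le_mono_l; lia.
have ht := t_nonneg (3 * m).+3.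
apply: (proj2 (Z.mul_le_mono_pos_r _ _ B hB)).
set D := (1000 ^ Z.of_nat m)%Z in hD h3 *.
set E := (14864 ^ Z.of_nat m)%Z in h3 *.
set P := phi (3 * m) in h1 h2.
set X := t (3 * m).+3 in h2 ht *.
have s1 : (616572917 * X * (D * B) <= 8 * P * (D * B))%Z.
  apply: Z.mul_le_mono_nonneg_r; lia.
have s2 : (B * P * (8 * D) <= C * 2102071041 * (8 * D))%Z.
  apply: Z.mul_le_mono_nonneg_r; lia.
have s3 : (D * C * (8 * 2102071041) <= E * B * (8 * 2102071041))%Z.
  apply: Z.mul_le_mono_nonneg_r; lia.
lia.
Qed.

Lemma Z_expn x m : Z.of_nat (expn x m) = (Z.of_nat x ^ Z.of_nat m)%Z.
Proof.
elim: m => [|m IH]; first by rewrite expn0.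
rewrite expnS Nat2Z.inj_mul IH Nat2Z.inj_succ Z.pow_succ_r //; lia.
Qed.

Definition Kn := locked (Z.to_nat 616572917).
Definition En := locked (Z.to_nat 16816568328).
Lemma Kn_Z : Z.of_nat Kn = 616572917%Z. Proof. by rewrite /Kn -lock Z2Nat.id. Qed.
Lemma En_Z : Z.of_nat En = 16816568328%Z. Proof. by rewrite /En -lock Z2Nat.id. Qed.
Lemma Kn_pos : ltn 0 Kn. Proof. apply/ssrnat.ltP; have := Kn_Z; lia. Qed.

Lemma bound_nat m : leq (Kn * expn 1000 m * T (3 * m).+3) (En * expn 14864 m).
Proof.
have := bound_Z m; rewrite /t; move: (T (3 * m).+3) => x hx.
have hk := Kn_Z. have he := En_Z.
generalize dependent Kn. generalize dependent En. intros e he k hk.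
apply/ssrnat.leP. apply Nat2Z.inj_le. rewrite !Nat2Z.inj_mul hk he !Z_expn.
have -> : Z.of_nat 1000 = 1000%Z by [].
have -> : Z.of_nat 14864 = 14864%Z by vm_compute.
lia.
Qed.

End ZP.
From mathcomp Require Import ring.
Local Open Scope ring_scope.

Lemma alg_fin (a b kk ee X Y : rat) m : 0 < a -> 0 < b -> 0 < kk ->
  kk * a ^+ m * X <= ee * b ^+ m -> Y <= X ->
  Y <= ee * a / (kk * b) * (b / a) ^+ m.+1.
Proof.
move=> ha hb hk H HY.
have nza : a != 0 by rewrite gt_eqF.
have nzb : b != 0 by rewrite gt_eqF.
have nzk : kk != 0 by rewrite gt_eqF.
have nzA : a ^+ m != 0 by rewrite expf_neq0.
have -> : ee * a / (kk * b) * (b / a) ^+ m.+1 = (ee * b ^+ m) / (kk * a ^+ m).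
  rewrite exprS expr_div_n; field.
  by rewrite nza nzb nzk nzA.
apply: (le_trans HY).
rewrite ler_pdivlMr; last by rewrite mulr_gt0 // exprn_gt0.
by rewrite mulrC.
Qed.

Lemma rat_bound : exists (C : rat) (N0 : nat), forall n : nat, (N0 <= n)%N ->
        ((#|P2 n|)%:R <= C * (14864%:R / 1000%:R) ^+ n :> rat)%R.
Proof.
exists ((ZP.En%:R * 1000%:R) / (ZP.Kn%:R * 14864%:R)), 1%N.
case=> [|m] // _.
have e3 : (3 * m.+1 = (3 * m).+3)%N by lia.
have h1 := P2_le m.+1; rewrite nwordsE e3 in h1.
have h2 := ZP.bound_nat m.
move: h1 h2; move: (T (3 * m).+3) => x h1 h2.
have hk := ZP.Kn_pos.
move: h2 hk; move: ZP.Kn ZP.En => k e h2 hk.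
have h2r : (k%:R * 1000%:R ^+ m * x%:R <= e%:R * 14864%:R ^+ m :> rat).
  move: h2; rewrite -(ler_nat rat) !natrM !natrX; exact.
clear h2.
have h1r : ((#|P2 m.+1|)%:R <= x%:R :> rat) by rewrite ler_nat; exact: h1.
have HH := @alg_fin 1000%:R 14864%:R k%:R e%:R x%:R (#|P2 m.+1|)%:R m.
apply: HH.
- by rewrite ltr0n.
- by rewrite ltr0n.
- rewrite ltr0n. exact: hk.
- exact: h2r.
- exact: h1r.
Qed.

Local Close Scope ring_scope.

Theorem mainTheorem10 :
  (forall n : nat,
      #|P2 n| <= nwords (3 * n)
   /\ (forall c : nat -> int, is_series_inverse Uden c ->
         Posz (nwords (3 * n)) = c (3 * n)%N))
  /\ (exists (C : rat) (N0 : nat), forall n : nat, (N0 <= n)%N ->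
        ((#|P2 n|)%:R <= C * (14864%:R / 1000%:R) ^+ n :> rat)%R).
Proof.
split; last exact: rat_bound.
move=> n; split; first exact: P2_le.
move=> c Hc; by rewrite (@series_T c Hc) nwordsE.
Qed.
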